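(* Let $(\mathcal Q,d)$ be a metric space, $Y$ a $\mathcal Q$-valued random variable, $o\in\mathcal Q$, and $\tau\in\mathcal S_0^+$ with $\mathbb E[\tau'(d(Y,o))]<\infty$. Fix $p\in\mathcal Q$. (i) If $\operatorname{diam}(\mathcal Q)=\infty$, then $$\liminf_{r\to\infty}\inf_{q\in\mathcal Q\setminus B(o,r)}\frac{\mathbb E[\tau(d(Y,q))-\tau(d(Y,p))]}{\tau(d(q,p))}=\limsup_{r\to\infty}\sup_{q\in\mathcal Q\setminus B(o,r)}\frac{\mathbb E[\tau(d(Y,q))-\tau(d(Y,p))]}{\tau(d(q,p))}=1.$$ (ii) If $p$ is an accumulation point of $\mathcal Q$, then $$\limsup_{r\to0}\sup_{q\in B(p,r)\setminus\{p\}}\frac{\mathbb E[\tau(d(Y,q))-\tau(d(Y,p))]}{d(q,p)}\le\mathbb E[\tau'(d(Y,p))].$$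
   Context: $\mathcal S$ is the set of nondecreasing convex $\tau:[0,\infty)\to\mathbb R$, differentiable on $(0,\infty)$ with concave derivative $\tau'$, with $\tau'(0):=\lim_{x\searrow0}\tau'(x)$; $\mathcal S_0^+$ is the set of $\tau\in\mathcal S$ with $\tau(0)=0$ and $\tau'(x)>0$ for all $x>0$. $B(p,r):=\{q\in\mathcal Q: d(q,p)<r\}$ is the open ball and $\operatorname{diam}(\mathcal Q)=\sup_{q,p}d(q,p)$. $\mathcal Q$ carries its Borel $\sigma$-algebra. *)

(* Defs.v *)
From HB Require Import structures.
From mathcomp Require Import all_boot all_order all_algebra.
From mathcomp Require Import all_classical all_reals all_analysis.
Set Implicit Arguments. Unset Strict Implicit. Unset Printing Implicit Defensive.
Import Order.TTheory GRing.Theory Num.Theory.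
Import numFieldNormedType.Exports.
Local Open Scope classical_set_scope.
Local Open Scope ring_scope.

Section Defs.
Variable R : realType.

Definition is_metric (Q : Type) (d : Q -> Q -> R) : Prop :=
  [/\ (forall x y, 0 <= d x y),
      (forall x y, d x y = 0 <-> x = y),
      (forall x y, d x y = d y x) &
      (forall x y z, d x z <= d x y + d y z)].

Definition mball (Q : Type) (d : Q -> Q -> R) (p : Q) (r : R) : set Q :=
  [set q | d q p < r].

Definition mopen (Q : Type) (d : Q -> Q -> R) (A : set Q) : Prop :=
  forall x, A x -> exists2 r : R, 0 < r & mball d x r `<=` A.

Definition mborel (Q : Type) (d : Q -> Q -> R) : set (set Q) :=
  <<s mopen d >>.

Definition borel_rv (dO : measure_display) (Omega : measurableType dO)
  (Q : Type) (d : Q -> Q -> R) (Y : Omega -> Q) : Prop :=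
  forall A, mborel d A -> measurable (Y @^-1` A).

Definition diam (Q : Type) (d : Q -> Q -> R) : \bar R :=
  ereal_sup [set (d q p)%:E | q in setT & p in setT].

Definition accumulation_point (Q : Type) (d : Q -> Q -> R) (p : Q) : Prop :=
  forall r : R, 0 < r -> exists q, q <> p /\ d q p < r.

Definition tauD (tau : R -> R) (x : R) : R :=
  if 0 < x then derive1 tau x else lim (derive1 tau x @[x --> 0^'+]).

(* the class S : nondecreasing convex tau : [0,oo) -> R, differentiable on
   (0,oo) with concave derivative (values of tau outside [0,oo) irrelevant) *)
Definition in_S (tau : R -> R) : Prop :=
  [/\ (forall x y, 0 <= x -> x <= y -> tau x <= tau y),
      (forall x y t, 0 <= x -> 0 <= y -> 0 <= t <= 1 ->
          tau (t * x + (1 - t) * y) <= t * tau x + (1 - t) * tau y),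
      (forall x, 0 < x -> derivable tau x 1) &
      (forall x y t, 0 < x -> 0 < y -> 0 <= t <= 1 ->
          t * derive1 tau x + (1 - t) * derive1 tau y <= derive1 tau (t * x + (1 - t) * y))].

Definition in_S0p (tau : R -> R) : Prop :=
  [/\ in_S tau, tau 0 = 0 & (forall x, 0 < x -> 0 < derive1 tau x)].

End Defs.

(* Main.v *)
Require Import Defs.
From HB Require Import structures.
From mathcomp Require Import all_boot all_order all_algebra.
From mathcomp Require Import all_classical all_reals all_analysis.
From mathcomp Require Import ring lra.
From mathcomp Require Import measurable_realfun.
Import Order.TTheory GRing.Theory Num.Theory.
Import numFieldNormedType.Exports.
Local Open Scope classical_set_scope.
Local Open Scope ring_scope.
Set Implicit Arguments. Unset Strict Implicit. Unset Printing Implicit Defensive.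

Section RealFacts.
Variable R : realType.
Variable tau : R -> R.
Hypothesis Htau : in_S0p tau.
Let g := derive1 tau.

Lemma g_pos x : 0 < x -> 0 < g x.
Proof. by case: Htau => _ _; apply. Qed.

Lemma g_conc x y t : 0 < x -> 0 < y -> 0 <= t <= 1 ->
  t * g x + (1 - t) * g y <= g (t * x + (1 - t) * y).
Proof. by case: Htau => -[_ _ _ h] _ _; apply: h. Qed.

Lemma g_nd x y : 0 < x -> x <= y -> g x <= g y.
Proof.
move=> x0 xy; rewrite leNgt; apply/negP => yx.
have y0 : 0 < y by apply: lt_le_trans xy.
have gx0 := g_pos x0. have gy0 := g_pos y0.
set dl := g x - g y.
have dl0 : 0 < dl by rewrite subr_gt0.
pose t := g x / (g x + dl).
have t1 : 1 - t = dl / (g x + dl) by rewrite /t; field; lra.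
pose z := x + (y - x) * (g x + dl) / dl.
have xlty : x < y by rewrite lt_neqAle xy andbT; apply/eqP => exy; rewrite /dl exy subrr ltxx in dl0.
have z0 : 0 < z.
  rewrite /z addr_gt0 //. apply: divr_gt0 => //; apply: mulr_gt0; lra.
have tz : t * x + (1 - t) * z = y.
  rewrite t1 /t /z. field. lra.
have := g_conc x0 z0 (t := t).
rewrite tz.
have t01 : 0 <= t <= 1.
  apply/andP; split; first by rewrite /t divr_ge0 //; lra.
  rewrite /t ler_pdivrMr; lra.
move/(_ t01).
have gz0 := g_pos z0.
have : 0 < (1 - t) * g z by rewrite t1; apply: mulr_gt0 => //; apply: divr_gt0; lra.
have : g y - t * g x < 0.
  rewrite /t. have -> : g y = g x - dl by rewrite /dl; ring.
  rewrite -(@ltr_pM2r _ (g x + dl)); last lra.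
  rewrite mul0r mulrBl mulrAC divfK; last lra.
  nra.
lra.
Qed.

Lemma g_chord x K : 0 < x -> 0 <= K -> g (x + K) <= g x * (1 + 2 * K / x).
Proof.
move=> x0 K0.
have x20 : 0 < x / 2 by apply: divr_gt0.
have xK0 : 0 < x + K by lra.
pose t := K / (x / 2 + K).
have t01 : 0 <= t <= 1.
  apply/andP; split; first by rewrite /t divr_ge0 //; lra.
  rewrite /t ler_pdivrMr; lra.
have := g_conc x20 xK0 t01.
have -> : t * (x / 2) + (1 - t) * (x + K) = x by rewrite /t; field; lra.
have gx20 := g_pos x20.
have : 0 <= t * g (x / 2) by apply: mulr_ge0 => //; [case/andP: t01|apply: ltW].
move=> h1 h2.
have h3 : (1 - t) * g (x + K) <= g x by lra.
have e1 : 1 - t = (x / 2) / (x / 2 + K) by rewrite /t; field; lra.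
rewrite e1 mulrC -ler_pdivlMr in h3; last by apply: divr_gt0 => //; lra.
apply: (le_trans h3); apply: ler_wpM2l; first exact/ltW/g_pos.
rewrite invf_div le_eqVlt; apply/orP; left; apply/eqP; field; lra.
Qed.

Lemma g_le3 x K : 0 < x -> 0 <= K -> K <= x -> g (x + K) <= 3 * g x.
Proof.
move=> x0 K0 Kx; apply: (le_trans (g_chord x0 K0)).
rewrite mulrC ler_wpM2r //; first exact/ltW/g_pos.
have : K / x <= 1 by rewrite ler_pdivrMr // mul1r.
lra.
Qed.


End RealFacts.


Section RealFacts2.
Variable R : realType.
Variable tau : R -> R.
Hypothesis Htau : in_S0p tau.
Let g := derive1 tau.

Lemma dnbhs_right (f : R -> R) (l : R) :
  f x @[x --> 0^'] --> l -> f x @[x --> 0^'+] --> l.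
Proof.
move=> H U /H; rewrite !nbhs_filterE /=; rewrite /dnbhs /at_right /within /=.
apply: filterS => u h hp; apply: h; exact: lt0r_neq0.
Qed.

Lemma tangent a b : 0 <= a -> 0 < b -> tau b + g b * (a - b) <= tau a.
Proof.
move=> a0 b0.
have db : derivable tau b 1 by case: Htau => -[_ _ h _] _ _; exact: h.
have dif := (derivable1_diffP tau b).1 db.
set v := a - b.
have dv : derivable tau b v := diff_derivable (v:=v) dif.
have Dv : 'D_v tau b = v * g b.
  rewrite deriveE // diff1E //.
have cv := dnbhs_right dv.
rewrite -/(derive tau b v) Dv in cv.
have : v * g b <= tau a - tau b.
  apply: (cvgr_to_le cv).
  near=> h.
  have h0 : 0 < h by near: h; exact: nbhs_right_gt.
  have h1 : h < 1 by near: h; exact: nbhs_right_lt.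
  rewrite /= /shift.
  have -> : h *: v + b = h * a + (1 - h) * b by rewrite /v /GRing.scale /=; ring.
  have hc : tau (h * a + (1 - h) * b) <= h * tau a + (1 - h) * tau b.
    case: Htau => -[_ hc _ _] _ _; apply: hc => //; [exact: ltW|].
    apply/andP; split; exact: ltW.
  rewrite /GRing.scale /= mulrC ler_pdivrMr //.
  nra.
rewrite /v; lra.
Unshelve. all: by end_near. Qed.


Lemma g_cvg0 : cvg (g x @[x --> 0^'+]).
Proof.
apply: nondecreasing_at_right_is_cvgr.
  near=> b => u w /andP[u0 _] _ uw.
  exact: (g_nd Htau u0 uw).
near=> b; exists 0 => _ [u /andP[u0 _] <-].
exact/ltW/(g_pos Htau u0).
Unshelve. all: by end_near. Qed.

Lemma G_pos x : 0 < x -> tauD tau x = g x.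
Proof. by move=> x0; rewrite /tauD x0. Qed.

Lemma G0_cvg : g x @[x --> 0^'+] --> tauD tau 0.
Proof. by rewrite /tauD ltxx; exact: g_cvg0. Qed.

Lemma G0_ge0 : 0 <= tauD tau 0.
Proof.
apply: (cvgr_to_ge G0_cvg); near=> x.
have x0 : 0 < x by near: x; exact: nbhs_right_gt.
exact/ltW/(g_pos Htau x0).
Unshelve. all: by end_near. Qed.

Lemma G0_le x : 0 < x -> tauD tau 0 <= g x.
Proof.
move=> x0; apply: (cvgr_to_le G0_cvg); near=> y.
have y0 : 0 < y by near: y; exact: nbhs_right_gt.
have yx : y < x by near: y; exact: nbhs_right_lt.
exact: (g_nd Htau y0 (ltW yx)).
Unshelve. all: by end_near. Qed.

Lemma G_nd x y : 0 <= x -> x <= y -> tauD tau x <= tauD tau y.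
Proof.
move=> x0 xy; have [ey|y0] := eqVneq y 0.
  by subst y; have -> : x = 0 by apply/eqP; rewrite eq_le xy x0.
have ypos : 0 < y by rewrite lt_neqAle eq_sym y0 (le_trans x0 xy).
rewrite (G_pos ypos); have [->|xn0] := eqVneq x 0; first exact: G0_le.
have xpos : 0 < x by rewrite lt_neqAle eq_sym xn0 x0.
by rewrite (G_pos xpos); exact: (g_nd Htau xpos xy).
Qed.

Lemma G_ge0 x : 0 <= x -> 0 <= tauD tau x.
Proof. by move=> x0; apply: (le_trans G0_ge0); exact: G_nd. Qed.

Lemma G_sub a b : 0 <= a -> 0 <= b ->
  tauD tau (a + b) <= 3 * tauD tau a + 3 * tauD tau b.
Proof.
wlog ba : a b / b <= a.
  move=> H a0 b0; have [ba|ab] := leP b a; first exact: H.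
  rewrite addrC [X in _ <= X]addrC; apply: H => //; exact: ltW.
move=> a0 b0.
have Ga := G_ge0 a0; have Gb := G_ge0 b0.
have [ea|an0] := eqVneq a 0.
  subst a; have -> : b = 0 by apply/eqP; rewrite eq_le ba b0.
  rewrite addr0; lra.
have apos : 0 < a by rewrite lt_neqAle eq_sym an0 a0.
have abpos : 0 < a + b by lra.
rewrite (G_pos abpos) (G_pos apos).
have h := g_le3 Htau apos b0 ba; rewrite -/g in h.
lra.
Qed.

Lemma G_le3 x K : 0 < x -> 0 <= K -> K <= x -> tauD tau (x + K) <= 3 * tauD tau x.
Proof.
move=> x0 K0 Kx; rewrite (G_pos x0) G_pos; last by lra.
exact: (g_le3 Htau).
Qed.

Lemma G_chord x K : 0 < x -> 0 <= K ->
  tauD tau (x + K) <= tauD tau x * (1 + 2 * K / x).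
Proof.
move=> x0 K0; rewrite (G_pos x0) G_pos; last by lra.
exact: (g_chord Htau).
Qed.

Lemma tau_nd x y : 0 <= x -> x <= y -> tau x <= tau y.
Proof. by case: Htau => -[h _ _ _] _ _; exact: h. Qed.

Lemma tau0 : tau 0 = 0.
Proof. by case: Htau. Qed.

Lemma tau_ge0 x : 0 <= x -> 0 <= tau x.
Proof. by move=> x0; rewrite -tau0; exact: tau_nd. Qed.

Lemma tau_diff a b : 0 <= a -> a <= b -> tau b - tau a <= tauD tau b * (b - a).
Proof.
move=> a0 ab; have [eb|bn0] := eqVneq b 0.
  subst b; have -> : a = 0 by apply/eqP; rewrite eq_le ab a0.
  by rewrite !subrr mulr0.
have bpos : 0 < b by rewrite lt_neqAle eq_sym bn0 (le_trans a0 ab).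
have := tangent a0 bpos; rewrite (G_pos bpos); lra.
Qed.

Lemma tau_diffL a b : 0 < a -> a <= b -> tauD tau a * (b - a) <= tau b - tau a.
Proof.
move=> a0 ab; have := tangent (le_trans (ltW a0) ab) a0; rewrite (G_pos a0); lra.
Qed.

Lemma tau_lower s : 0 < s -> s * tauD tau s <= 6 * tau s.
Proof.
move=> s0.
have s2 : 0 < s / 2 by apply: divr_gt0.
have ss : s / 2 <= s by rewrite ler_pdivrMr //; lra.
have h1 := tau_diffL s2 ss.
have h2 := tau_ge0 (ltW s2).
have h3 := G_le3 s2 (ltW s2) (lexx _).
have e : s / 2 + s / 2 = s by field.
rewrite e in h3.
have e2 : s - s / 2 = s / 2 by field.
rewrite e2 in h1.
have hG := G_ge0 (ltW s2).
nra.
Qed.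


Lemma tau_abs a c M : 0 <= a -> 0 <= c -> a <= M -> c <= M ->
  `|tau a - tau c| <= tauD tau M * `|a - c|.
Proof.
move=> a0 c0 aM cM.
wlog ca : a c a0 c0 aM cM / c <= a.
  move=> H; have [ca|ac] := leP c a; first exact: H.
  by rewrite distrC [`|a - c|]distrC; apply: H => //; exact: ltW.
have h1 := tau_diff c0 ca.
have h2 := tau_nd c0 ca.
have h3 := G_nd (le_trans c0 ca) aM.
rewrite !ger0_norm; [|lra|lra].
have : 0 <= a - c by lra.
nra.
Qed.

Lemma G_rcont x : 0 <= x ->
  (fun n : nat => tauD tau (x + n.+1%:R^-1)) @ \oo --> tauD tau x.
Proof.
move=> x0; apply/cvgrPdist_lt => e e0.
have [->|xn0] := eqVneq x 0.
  have [t0 [t0p ht0]] : exists t0, 0 < t0 /\ `|tauD tau 0 - g t0| < e.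
    near (0:R)^'+ => t0; exists t0; split.
      by near: t0; exact: nbhs_right_gt.
    near: t0; by move/cvgrPdist_lt: G0_cvg => /(_ e e0).
  near=> n.
  have hn : n.+1%:R^-1 < t0.
    by near: n; exact: (near_infty_natSinv_lt (PosNum t0p)).
  have hp : 0 < n.+1%:R^-1 :> R by rewrite invr_gt0 ltr0n.
  rewrite add0r (G_pos hp).
  have l1 := G0_le hp.
  have l2 := g_nd Htau hp (ltW hn).
  rewrite -/g in l2.
  move: ht0; rewrite distrC [X in _ -> X < _]distrC !ger0_norm; [lra|lra|].
  by rewrite subr_ge0; exact: (le_trans l1).
have xp : 0 < x by rewrite lt_neqAle eq_sym xn0 x0.
have Gx := G_ge0 x0.
have dp : 0 < e * x / (2 * tauD tau x + 1).
  apply: divr_gt0; [exact: mulr_gt0|lra].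
near=> n.
have hn : n.+1%:R^-1 < e * x / (2 * tauD tau x + 1).
  by near: n; exact: (near_infty_natSinv_lt (PosNum dp)).
have hp : 0 < n.+1%:R^-1 :> R by rewrite invr_gt0 ltr0n.
set h := n.+1%:R^-1 in hn hp *.
have c1 := G_chord xp (ltW hp).
have c2 : tauD tau x <= tauD tau (x + h) by apply: G_nd => //; lra.
rewrite ltr_pdivlMr in hn; last by lra.
have k1 : 2 * tauD tau x * h < e * x by nra.
have k2 : tauD tau x * (2 * h / x) < e.
  by rewrite mulrA ltr_pdivrMr // mulrA (mulrC _ 2).
rewrite distrC ger0_norm; last by lra.
have : tauD tau x * (1 + 2 * h / x) = tauD tau x + tauD tau x * (2 * h / x) by ring.
lra.
Unshelve. all: by end_near. Qed.

End RealFacts2.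


Section Meas.
Variables (R : realType) (Q : Type) (d : Q -> Q -> R).
Hypothesis Hd : is_metric d.
Variables (dO : measure_display) (Omega : measurableType dO) (Y : Omega -> Q).
Hypothesis HY : borel_rv d Y.

Lemma d_ge0 x y : 0 <= d x y. Proof. by case: Hd. Qed.
Lemma d_sym x y : d x y = d y x. Proof. by case: Hd. Qed.
Lemma d_tri x y z : d x z <= d x y + d y z. Proof. by case: Hd. Qed.
Lemma d_eq0 x y : d x y = 0 <-> x = y. Proof. by case: Hd. Qed.
Lemma d_refl x : d x x = 0. Proof. by apply/d_eq0. Qed.

Lemma mopen_gt q r : mopen d [set x | r < d x q].
Proof.
move=> x /= rx; exists (d x q - r); first by rewrite subr_gt0.
move=> z /=; rewrite /mball /= => hz.
have := d_tri x z q; rewrite (d_sym x z); lra.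
Qed.

Lemma measurable_dY q : measurable_fun setT (fun w => d (Y w) q).
Proof.
apply: (measurability (@measurable_realfun.RGenOInfty.G R)) => [|/= _ [_] [r] -> <-].
  exact: measurable_realfun.RGenOInfty.measurableE.
rewrite setTI.
have -> : (fun w => d (Y w) q) @^-1` `]r, +oo[%classic = Y @^-1` [set x | r < d x q].
  by apply/seteqP; split => w /=; rewrite in_itv /= andbT.
apply: HY; apply: sub_sigma_algebra; exact: mopen_gt.
Qed.

Lemma measurable_comp_nd (f : R -> R) q :
  (forall x y, 0 <= x -> x <= y -> f x <= f y) ->
  measurable_fun setT (fun w => f (d (Y w) q)).
Proof.
move=> fnd.
have -> : (fun w => f (d (Y w) q)) = (fun x => f (Num.max x 0)) \o (fun w => d (Y w) q).
  by apply/funext => w /=; rewrite max_l // d_ge0.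
apply: measurableT_comp; last exact: measurable_dY.
apply: measurable_realfun.nondecreasing_measurable => // x y xy.
apply: fnd; first by rewrite le_max lexx orbT.
by rewrite ge_max !le_max xy lexx orbT.
Qed.

End Meas.


Section Lim.
Variables (R : realType) (Q : Type) (d : Q -> Q -> R) (o : Q) (ratio : Q -> \bar R).
Hypothesis ne : forall r : R, exists q, r <= d q o.
Hypothesis cl : forall e : R, 0 < e -> exists R0 : R,
  forall q, R0 <= d q o -> ((1 - e)%:E <= ratio q <= (1 + e)%:E)%E.

Let compl r : ~` mball d o r = [set q | r <= d q o].
Proof. by apply/seteqP; split => q /=; rewrite /mball /= => h; [rewrite leNgt; exact/negP | move: h; rewrite leNgt => /negP]. Qed.

Lemma lim_einf1 :
  limf_einf (fun r : R => ereal_inf (ratio @` (~` mball d o r))) (pinfty_nbhs R) = 1%E.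
Proof.
rewrite limf_einfE; apply/eqP; rewrite eq_le; apply/andP; split.
  apply: ge_ereal_sup => _ [V FV <-].
  apply/lee_addgt0Pr => e e0.
  have [R0 HR0] := cl e0.
  have [r Rr Vr] := pinfty_ex_gt (num_real R0) FV.
  have [q qr] := ne r.
  apply: ge_ereal_inf; exists (ereal_inf (ratio @` (~` mball d o r))); first by exists r.
  apply: ge_ereal_inf; exists (ratio q).
    by exists q => //; rewrite compl.
  have /andP[_ ] := HR0 q (le_trans (ltW Rr) qr).
  by rewrite EFinD.
apply/lee_subgt0Pr => e e0.
have [R0 HR0] := cl e0.
apply: le_ereal_sup_tmp.
exists (ereal_inf ((fun r => ereal_inf (ratio @` (~` mball d o r))) @` [set r | R0 < r])).
  exists [set r | R0 < r] => //; exists R0; split => //; exact: num_real.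
apply: le_ereal_inf_tmp => _ [r Rr <-].
apply: le_ereal_inf_tmp => _ [q + <-]; rewrite compl /= => qr.
have /andP[+ _] := HR0 q (le_trans (ltW Rr) qr).
by rewrite EFinB.
Qed.

Lemma lim_esup1 :
  limf_esup (fun r : R => ereal_sup (ratio @` (~` mball d o r))) (pinfty_nbhs R) = 1%E.
Proof.
rewrite limf_esupE; apply/eqP; rewrite eq_le; apply/andP; split.
  apply/lee_addgt0Pr => e e0.
  have [R0 HR0] := cl e0.
  apply: ge_ereal_inf.
  exists (ereal_sup ((fun r => ereal_sup (ratio @` (~` mball d o r))) @` [set r | R0 < r])).
    exists [set r | R0 < r] => //; exists R0; split => //; exact: num_real.
  apply: ge_ereal_sup => _ [r Rr <-].
  apply: ge_ereal_sup => _ [q + <-]; rewrite compl /= => qr.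
  have /andP[_ ] := HR0 q (le_trans (ltW Rr) qr).
  by rewrite EFinD.
apply: le_ereal_inf_tmp => _ [V FV <-].
apply/lee_subgt0Pr => e e0.
have [R0 HR0] := cl e0.
have [r Rr Vr] := pinfty_ex_gt (num_real R0) FV.
have [q qr] := ne r.
apply: le_ereal_sup_tmp; exists (ereal_sup (ratio @` (~` mball d o r))); first by exists r.
apply: le_ereal_sup_tmp; exists (ratio q).
  by exists q => //; rewrite compl.
have /andP[+ _] := HR0 q (le_trans (ltW Rr) qr).
by rewrite EFinB.
Qed.

End Lim.


Section Ratio.
Variable R : realType.
Variable tau : R -> R.
Hypothesis Htau : in_S0p tau.
Local Notation G := (tauD tau).

Lemma G1_pos : 0 < G 1.
Proof. by rewrite (G_pos tau ltr01); exact: (g_pos Htau ltr01). Qed.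

Lemma tau_pos s : 0 < s -> 0 < tau s.
Proof.
move=> s0; have := tau_lower Htau s0.
have := g_pos Htau s0; rewrite -(G_pos tau s0) => h.
have : 0 < s * G s by apply: mulr_gt0.
lra.
Qed.

Lemma Gs_ge1 s : 1 <= s -> G 1 <= G s.
Proof. by move=> s1; apply: (G_nd Htau) => //; exact: ler01. Qed.

Lemma ratio_pt a D s : 0 <= a -> 0 <= D -> 1 <= s -> `|a - s| <= D ->
  `|(tau a - tau D) / tau s - 1| <=
    (18 * D + 6 * (3 * G D * D + tau D) / G 1) / s.
Proof.
move=> a0 D0 s1 asD.
have s0 : 0 < s by lra.
have T0 := tau_pos s0.
have G10 := G1_pos.
have Gs1 := Gs_ge1 s1.
have GD0 := G_ge0 Htau D0.
have Gs0 := G_ge0 Htau (ltW s0).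
have tD0 := tau_ge0 Htau D0.
have low := tau_lower Htau s0.
have [asl asr] : s - D <= a /\ a <= s + D by move: asD; rewrite ler_norml; lra.
set X := tau a - tau D - tau s.
have hX : `|X| <= 3 * G s * D + (3 * G D * D + tau D).
  rewrite ler_norml; apply/andP; split.
    have [sa|aslt] := leP s a.
      have := tau_nd Htau (ltW s0) sa; rewrite /X; nra.
    have := tau_diff Htau a0 (ltW aslt); rewrite /X.
    have : G s * (s - a) <= G s * D by apply: ler_wpM2l => //; lra.
    nra.
  have h1 := tau_nd Htau a0 asr.
  have sD : s <= s + D by lra.
  have h2 := tau_diff Htau (ltW s0) sD.
  have h3 := G_sub Htau (ltW s0) D0.
  have : G (s + D) * (s + D - s) <= (3 * G s + 3 * G D) * D.
    have -> : s + D - s = D by ring.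
    by apply: ler_wpM2r.
  rewrite /X; nra.
have -> : (tau a - tau D) / tau s - 1 = X / tau s by rewrite /X; field; lra.
rewrite normrM normfV (gtr0_norm T0).
set Z := 3 * G D * D + tau D.
have GDD : 0 <= G D * D by apply: mulr_ge0.
have Z0 : 0 <= Z by rewrite /Z; lra.
set u := tau s / s.
have su : s * u = tau s by rewrite /u; field; lra.
set v := u / G 1.
have gv : G 1 * v = u by rewrite /v; field; lra.
have Gu : G s <= 6 * u.
  have : s * G s <= s * (6 * u) by rewrite mulrCA su.
  by rewrite ler_pM2l.
have v1 : 1 <= 6 * v.
  have : G 1 * 1 <= G 1 * (6 * v) by rewrite mulrCA gv mulr1; lra.
  by rewrite ler_pM2l.
have -> : (18 * D + 6 * Z / G 1) / s = (18 * D * u + 6 * Z * v) / tau s.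
  rewrite /v /u; field; lra.
rewrite ler_pM2r ?invr_gt0 //.
have : 3 * G s * D <= 18 * D * u by nra.
have : Z <= 6 * Z * v by nra.
rewrite -/Z in hX; lra.
Qed.


Lemma ratio_dom a D s : 0 <= a -> 0 <= D -> 1 <= s -> `|a - D| <= s ->
  `|(tau a - tau D) / tau s| <= 18 + 18 * G D / G 1.
Proof.
move=> a0 D0 s1 aDs.
have s0 : 0 < s by lra.
have T0 := tau_pos s0.
have G10 := G1_pos.
have Gs1 := Gs_ge1 s1.
have GD0 := G_ge0 Htau D0.
have Gs0 := G_ge0 Htau (ltW s0).
have low := tau_lower Htau s0.
have aM : a <= D + s by move: aDs; rewrite ler_norml; lra.
have DM : D <= D + s by lra.
have h1 := tau_abs Htau a0 D0 aM DM.
have h2 := G_sub Htau D0 (ltW s0).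
have GDs0 : 0 <= G (D + s) by apply: (G_ge0 Htau); lra.
have h3 : `|tau a - tau D| <= (3 * G D + 3 * G s) * s.
  apply: (le_trans h1); apply: (le_trans (ler_wpM2l GDs0 aDs)).
  by apply: ler_wpM2r => //; exact: ltW.
rewrite normrM normfV (gtr0_norm T0).
set u := tau s / s.
have su : s * u = tau s by rewrite /u; field; lra.
have Gu : G s <= 6 * u.
  have : s * G s <= s * (6 * u) by rewrite mulrCA su.
  by rewrite ler_pM2l.
rewrite ler_pdivrMr //.
have -> : (18 + 18 * G D / G 1) * tau s = 18 * s * u + 18 * G D * s * (u / G 1).
  rewrite -su; field; lra.
have : 3 * G s * s <= 18 * s * u by nra.
have : 3 * G D * s <= 18 * G D * s * (u / G 1).
  have -> : 18 * G D * s * (u / G 1) = (3 * G D * s) * (6 * u / G 1) by field; lra.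
  rewrite -[X in X <= _]mulr1; apply: ler_wpM2l; first by have := mulr_ge0 GD0 (ltW s0); lra.
  by rewrite ler_pdivlMr // mul1r; lra.
lra.
Qed.

End Ratio.


Section Main.
Variables (R : realType) (dO : measure_display) (Omega : measurableType dO)
  (P : probability Omega R) (Q : Type) (d : Q -> Q -> R) (Y : Omega -> Q)
  (o p : Q) (tau : R -> R).
Hypotheses (Hd : is_metric d) (HY : borel_rv d Y) (Htau : in_S0p tau)
  (Hint : (\int[P]_w (tauD tau (d (Y w) o))%:E < +oo)%E).
Local Notation G := (tauD tau).

Lemma mG q : measurable_fun setT (fun w => G (d (Y w) q)).
Proof. exact: (measurable_comp_nd Hd HY q (G_nd Htau)). Qed.

Lemma mtau q : measurable_fun setT (fun w => tau (d (Y w) q)).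
Proof. exact: (measurable_comp_nd Hd HY q (tau_nd Htau)). Qed.

Lemma intGo : P.-integrable setT (fun w => (G (d (Y w) o))%:E).
Proof.
apply/integrableP; split; first exact/measurable_realfun.measurable_EFinP/mG.
rewrite (eq_integral (fun w => (G (d (Y w) o))%:E)) //.
move=> w _ /=; rewrite ger0_norm //; exact/(G_ge0 Htau)/(d_ge0 Hd).
Qed.

Lemma intDom (k1 k2 : R) :
  P.-integrable setT (fun w => (k1 * G (d (Y w) o) + k2)%:E).
Proof.
have -> : (fun w => (k1 * G (d (Y w) o) + k2)%:E) =
    (fun w => k1%:E * (G (d (Y w) o))%:E)%E \+ (EFin \o cst k2).
  by apply/funext => w /=; rewrite EFinD EFinM.
apply: integrableD => //; first exact/integrableZl/intGo.
exact: finite_measure_integrable_cst.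
Qed.

Lemma int_bound (f : Omega -> R) k1 k2 : measurable_fun setT f ->
  (forall w, `|f w| <= k1 * G (d (Y w) o) + k2) ->
  P.-integrable setT (EFin \o f).
Proof.
move=> mf fb; apply: le_integrable (intDom k1 k2) => //.
  exact/measurable_realfun.measurable_EFinP.
move=> w _ /=; rewrite lee_fin; apply: (le_trans (fb w)); exact: ler_norm.
Qed.

Lemma GD_bound c w : 0 <= c ->
  G (d (Y w) p + c) <= 3 * G (d (Y w) o) + 3 * G (d o p + c).
Proof.
move=> c0; apply: le_trans (G_sub Htau (d_ge0 Hd _ _) _); last first.
  by apply: addr_ge0 => //; exact: d_ge0.
apply: (G_nd Htau); first by apply: addr_ge0 => //; exact: d_ge0.
have := d_tri Hd (Y w) o p; lra.
Qed.


Let Ediff q := (\int[P]_w (tau (d (Y w) q) - tau (d (Y w) p))%:E)%E.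

Lemma dist_bound q w : `|d (Y w) q - d (Y w) p| <= d q p.
Proof.
have h1 := d_tri Hd (Y w) p q; have h2 := d_tri Hd (Y w) q p.
rewrite (d_sym Hd p q) in h1; rewrite ler_norml; lra.
Qed.

Lemma diff_bound q w : `|tau (d (Y w) q) - tau (d (Y w) p)| <=
  G (d (Y w) p + d q p) * d q p.
Proof.
have a0 := d_ge0 Hd (Y w) q; have D0 := d_ge0 Hd (Y w) p.
have s0 := d_ge0 Hd q p.
have db := dist_bound q w.
have aM : d (Y w) q <= d (Y w) p + d q p by move: db; rewrite ler_norml; lra.
have DM : d (Y w) p <= d (Y w) p + d q p by lra.
apply: (le_trans (tau_abs Htau a0 D0 aM DM)).
apply: ler_wpM2l => //; apply: (G_ge0 Htau); lra.
Qed.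

Lemma Ediff_int q :
  P.-integrable setT (fun w => (tau (d (Y w) q) - tau (d (Y w) p))%:E).
Proof.
have s0 := d_ge0 Hd q p.
apply: (int_bound (k1 := 3 * d q p) (k2 := 3 * G (d o p + d q p) * d q p)).
  exact: measurable_funB (mtau q) (mtau p).
move=> w; apply: (le_trans (diff_bound q w)).
have := GD_bound w s0; have := G_ge0 Htau (d_ge0 Hd (Y w) o). nra.
Qed.

Lemma mGs (r : R) : 0 <= r -> measurable_fun setT (fun w => G (d (Y w) p + r)).
Proof.
move=> r0; apply: (measurable_comp_nd Hd HY p (f := fun x => G (x + r))).
move=> x y x0 xy; apply: (G_nd Htau); lra.
Qed.

Lemma intGs (r : R) : 0 <= r ->
  P.-integrable setT (fun w => (G (d (Y w) p + r))%:E).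
Proof.
move=> r0; apply: (int_bound (k1 := 3) (k2 := 3 * G (d o p + r))).
  exact: mGs.
move=> w; rewrite ger0_norm; first exact: GD_bound.
by apply: (G_ge0 Htau); have := d_ge0 Hd (Y w) p; lra.
Qed.

Lemma Ediff_le q : 0 < d q p ->
  (Ediff q * ((d q p)^-1)%:E <= \int[P]_w (G (d (Y w) p + d q p))%:E)%E.
Proof.
move=> s0.
have h1 : (Ediff q <= \int[P]_w ((G (d (Y w) p + d q p))%:E * (d q p)%:E))%E.
  apply: le_integral => //; first exact: Ediff_int.
    exact/integrableZr/intGs/ltW.
  move=> w _; rewrite -EFinM lee_fin.
  exact: le_trans (ler_norm _) (diff_bound q w).
rewrite integralZr // in h1; last exact/intGs/ltW.
have := lee_wpmul2r (x := ((d q p)^-1)%:E) _ h1.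
rewrite lee_fin invr_ge0 => /(_ (ltW s0)).
by rewrite -muleA -EFinM mulfV ?gt_eqF // mule1.
Qed.

Lemma h_mono r1 r2 : 0 <= r1 -> r1 <= r2 ->
  (\int[P]_w (G (d (Y w) p + r1))%:E <= \int[P]_w (G (d (Y w) p + r2))%:E)%E.
Proof.
move=> r10 r12.
have D0 w := d_ge0 Hd (Y w) p.
apply: ge0_le_integral => //.
  by move=> w _; rewrite lee_fin; apply: (G_ge0 Htau); have := D0 w; lra.
  by apply/measurable_EFinP/mGs.
  by apply/measurable_EFinP/mGs; lra.
move=> w _; rewrite lee_fin; apply: (G_nd Htau); last lra.
by have := D0 w; lra.
Qed.

Lemma h_cvg : (fun n : nat => \int[P]_w (G (d (Y w) p + n.+1%:R^-1))%:E)%E @ \oo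
   --> (\int[P]_w (G (d (Y w) p))%:E)%E.
Proof.
have hn (n : nat) : 0 <= n.+1%:R^-1 :> R by rewrite invr_ge0 ler0n.
have hn1 (n : nat) : n.+1%:R^-1 <= 1 :> R by rewrite invf_le1 ?ler1n // ltr0n.
have D0 w := d_ge0 Hd (Y w) p.
have mf_ (n : nat) : measurable_fun setT (fun w => (G (d (Y w) p + n.+1%:R^-1))%:E).
  exact/measurable_EFinP/mGs.
have mf : measurable_fun setT (fun w => (G (d (Y w) p))%:E).
  by apply/measurable_EFinP; rewrite (_ : (fun w => _) = (fun w => G (d (Y w) p + 0))); [exact: mGs|apply/funext => w; rewrite addr0].
have ff : {ae P, forall w, setT w -> (fun n => (G (d (Y w) p + n.+1%:R^-1))%:E) @ \oo --> (G (d (Y w) p))%:E}.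
  apply: aeW => w _; apply: cvg_EFin; first by near=> n.
  exact: (G_rcont Htau (D0 w)).
have ig : P.-integrable setT (fun w => (3 * G (d (Y w) o) + 3 * G (d o p + 1))%:E).
  exact: intDom.
have fg : {ae P, forall w n, setT w -> `|(G (d (Y w) p + n.+1%:R^-1))%:E| <= (3 * G (d (Y w) o) + 3 * G (d o p + 1))%:E}%E.
  apply: aeW => w n _ /=; rewrite lee_fin ger0_norm; last first.
    by apply: (G_ge0 Htau); apply: addr_ge0.
  apply: le_trans (GD_bound w ler01).
  by apply: (G_nd Htau); [apply: addr_ge0|rewrite lerD2l].
have [_ _] := @dominated_convergence _ _ _ P setT measurableT _ _ _ mf_ mf ff ig fg.
by [].
Unshelve. all: by end_near. Qed.



Lemma part2 :
  (limf_esup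
     (fun r : R => ereal_sup ((fun q => (Ediff q * ((d q p)^-1)%:E)%E)
                                 @` (mball d p r `\ p)))
     (0%R^'+)
   <= \int[P]_w (G (d (Y w) p))%:E)%E.
Proof.
apply: (cvge_to_ge h_cvg); apply: nearW => n.
have hp : 0 < n.+1%:R^-1 :> R by rewrite invr_gt0 ltr0n.
set Vn := [set r : R | 0 < r < n.+1%:R^-1].
have VnF : (0:R)^'+ Vn.
  near=> r; apply/andP; split; near: r; [exact: nbhs_right_gt|exact: nbhs_right_lt].
rewrite limf_esupE; apply: ge_ereal_inf.
eexists; first by exists Vn.
apply: ge_ereal_sup => _ [r /andP[r0 rn] <-].
apply: ge_ereal_sup => _ [q [qb qp] <-].
have s0 : 0 < d q p.
  rewrite lt_neqAle d_ge0 // andbT; apply/eqP => /esym /(d_eq0 Hd) qp'.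
  exact: qp.
apply: le_trans (Ediff_le s0) _.
apply: h_mono; first exact: d_ge0.
rewrite /mball /= in qb; exact: ltW (lt_trans qb rn).
Unshelve. all: by end_near. Qed.


Lemma ratio_int q : (Ediff q * ((tau (d q p))^-1)%:E =
  \int[P]_w ((tau (d (Y w) q) - tau (d (Y w) p)) / tau (d q p))%:E)%E.
Proof.
rewrite -integralZr //; last exact: Ediff_int.
Qed.

Lemma tri_s q w : `|d (Y w) q - d q p| <= d (Y w) p.
Proof.
have h1 := d_tri Hd (Y w) p q; have h2 := d_tri Hd q (Y w) p.
rewrite (d_sym Hd p q) in h1; rewrite (d_sym Hd q (Y w)) in h2.
rewrite ler_norml; lra.
Qed.

Lemma seq_cvg (qn : nat -> Q) : (forall n : nat, n.+1%:R <= d (qn n) p) ->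
  (fun n => Ediff (qn n) * ((tau (d (qn n) p))^-1)%:E)%E @ \oo --> 1%E.
Proof.
move=> hq.
have s1 n : 1 <= d (qn n) p by apply: le_trans (hq n); rewrite ler1n.
have G10 := G1_pos Htau.
have -> : (fun n => Ediff (qn n) * ((tau (d (qn n) p))^-1)%:E)%E =
  (fun n => \int[P]_w ((tau (d (Y w) (qn n)) - tau (d (Y w) p)) / tau (d (qn n) p))%:E)%E.
  by apply/funext => n; exact: ratio_int.
set k1 := 54 / G 1.
set k2 := 18 + 54 * G (d o p) / G 1.
have mf_ (n : nat) : measurable_fun setT
    (fun w => ((tau (d (Y w) (qn n)) - tau (d (Y w) p)) / tau (d (qn n) p))%:E).
  apply/measurable_EFinP; apply: measurable_funM; last exact: measurable_cst.
  exact: measurable_funB (mtau _) (mtau _).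
have mf : measurable_fun setT (fun w : Omega => (1:R)%:E) by exact: measurable_cst.
have ff : {ae P, forall w, setT w -> (fun n => ((tau (d (Y w) (qn n)) - tau (d (Y w) p)) / tau (d (qn n) p))%:E) @ \oo --> (1:R)%:E}.
  apply: aeW => w _; apply: cvg_EFin; first by near=> n.
  set D := d (Y w) p.
  have D0 : 0 <= D := d_ge0 Hd _ _.
  set C := 18 * D + 6 * (3 * G D * D + tau D) / G 1.
  have C0 : 0 <= C.
    have := G_ge0 Htau D0; have := tau_ge0 Htau D0; move=> h1 h2.
    rewrite /C; apply: addr_ge0; first by lra.
    apply: divr_ge0; last lra. have : 0 <= G D * D by apply: mulr_ge0. lra.
  apply/cvgrPdist_lt => e e0.
  have ep : 0 < e / (C + 1) by apply: divr_gt0; lra.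
  near=> n.
  have hn : n.+1%:R^-1 < e / (C + 1) by near: n; exact: (near_infty_natSinv_lt (PosNum ep)).
  have hp : 0 < n.+1%:R^-1 :> R by rewrite invr_gt0 ltr0n.
  rewrite distrC /=.
  have b := ratio_pt Htau (d_ge0 Hd (Y w) (qn n)) D0 (s1 n) (tri_s (qn n) w).
  rewrite -/C in b.
  apply: (le_lt_trans b).
  have sn := hq n.
  have : C / d (qn n) p <= C * n.+1%:R^-1.
    apply: ler_wpM2l => //; rewrite lef_pV2 ?posrE ?ltr0n //; have := s1 n; lra.
  move=> h.
  apply: (le_lt_trans h).
  rewrite ltr_pdivlMr in hn; last by lra.
  set t := n.+1%:R^-1 in hn hp *.
  nra.
have ig : P.-integrable setT (fun w => (k1 * G (d (Y w) o) + k2)%:E) by exact: intDom.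
have fg : {ae P, forall w n, setT w -> `|((tau (d (Y w) (qn n)) - tau (d (Y w) p)) / tau (d (qn n) p))%:E| <= (k1 * G (d (Y w) o) + k2)%:E}%E.
  apply: aeW => w n _ /=; rewrite lee_fin.
  set D := d (Y w) p.
  have D0 : 0 <= D := d_ge0 Hd _ _.
  have b := ratio_dom Htau (d_ge0 Hd (Y w) (qn n)) D0 (s1 n) (dist_bound (qn n) w).
  apply: (le_trans b).
  have gb := GD_bound w (lexx 0); rewrite !addr0 in gb.
  rewrite /k1 /k2.
  have : 18 * G D / G 1 <= 18 * (3 * G (d (Y w) o) + 3 * G (d o p)) / G 1.
    by rewrite ler_pM2r ?invr_gt0 // ler_pM2l.
  have -> : 18 * (3 * G (d (Y w) o) + 3 * G (d o p)) / G 1 = 54 / G 1 * G (d (Y w) o) + 54 * G (d o p) / G 1.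
    by field; lra.
  lra.
have [_ _] := @dominated_convergence _ _ _ P setT measurableT _ _ _ mf_ mf ff ig fg.
suff -> : (\int[P]_(w in setT) (1:R)%:E = 1)%E by [].
by rewrite integral_cst // mul1e; exact: probability_setT.
Unshelve. all: by end_near. Qed.


Lemma claim1 (e : R) : 0 < e -> exists R0 : R, forall q, R0 <= d q o ->
  ((1 - e)%:E <= Ediff q * ((tau (d q p))^-1)%:E <= (1 + e)%:E)%E.
Proof.
move=> e0; apply: contrapT => H.
move/forallNP: H => H.
have H' (n : nat) : exists q, n.+1%:R + d o p <= d q o /\
   ~ ((1 - e)%:E <= Ediff q * ((tau (d q p))^-1)%:E <= (1 + e)%:E)%E.
  have /existsNP [q /not_implyP [h1 h2]] := H (n.+1%:R + d o p).
  by exists q.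
have [qn hqn] := choice H'.
have hq n : n.+1%:R <= d (qn n) p.
  have [h1 _] := hqn n; have := d_tri Hd (qn n) p o; rewrite (d_sym Hd p o); lra.
have cv := seq_cvg hq.
have [n [fn hn]] : exists n, (Ediff (qn n) * ((tau (d (qn n) p))^-1)%:E)%E \is a fin_num /\
    `|1 - fine (Ediff (qn n) * ((tau (d (qn n) p))^-1)%:E)%E| < e.
  near \oo => n; exists n; split; near: n.
    exact: (cvg_is_fine cv).
  by move/fine_cvgP: cv => [_ /cvgrPdist_lt /(_ e e0)].
have [_ hn'] := hqn n; apply: hn'.
rewrite -(fineK fn) !lee_fin.
move: hn; rewrite ltr_norml; move=> /andP[h1 h2]; apply/andP; split; lra.
Unshelve. all: by end_near. Qed.

Lemma ne_compl : diam d = +oo%E -> forall r : R, exists q, r <= d q o.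
Proof.
move=> hd r; apply: contrapT => H.
move/forallNP: H => H.
have H2 q : d q o < r by rewrite ltNge; apply/negP; exact: H.
have : (diam d <= (2 * r)%:E)%E.
  rewrite /diam; apply: ge_ereal_sup => _ [q _ [p' _ <-]].
  rewrite lee_fin; have := d_tri Hd q o p'; have := H2 q; have := H2 p'.
  rewrite (d_sym Hd p' o); lra.
by rewrite hd leye_eq.
Qed.

End Main.



Theorem mainTheorem4 (R : realType) (dO : measure_display)
  (Omega : measurableType dO) (P : probability Omega R)
  (Q : Type) (d : Q -> Q -> R) (Y : Omega -> Q) (o p : Q) (tau : R -> R) :
  is_metric d ->
  borel_rv d Y ->
  in_S0p tau ->
  (\int[P]_w (tauD tau (d (Y w) o))%:E < +oo)%E ->
  let Ediff := fun q : Q =>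
    (\int[P]_w (tau (d (Y w) q) - tau (d (Y w) p))%:E)%E in
  (diam d = +oo%E ->
     let ratio := fun q : Q => (Ediff q * ((tau (d q p))^-1)%:E)%E in
     limf_einf (fun r : R => ereal_inf (ratio @` (~` mball d o r))) (pinfty_nbhs R) = 1%E /\
     limf_esup (fun r : R => ereal_sup (ratio @` (~` mball d o r))) (pinfty_nbhs R) = 1%E) /\
  (accumulation_point d p ->
     (limf_esup
        (fun r : R => ereal_sup ((fun q => (Ediff q * ((d q p)^-1)%:E)%E)
                                   @` (mball d p r `\ p)))
        (0%R^'+)
      <= \int[P]_w (tauD tau (d (Y w) p))%:E)%E).
Proof.
move=> Hd HY Htau Hint Ediff; split.
  move=> hdiam ratio.
  have ne := ne_compl o Hd hdiam.
  have cl := claim1 p Hd HY Htau Hint.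
  split; [exact: lim_einf1 ne cl|exact: lim_esup1 ne cl].
move=> _; exact: (part2 p Hd HY Htau Hint).
Qed.
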